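(* The category $\mathsf{HSLat}$ of Heyting semilattices satisfies the condition (SSH): for every Heyting semilattice $B$, the kernel functor $\mathrm{Ker}_B\colon \mathsf{Pt}_B(\mathsf{HSLat})\to\mathsf{HSLat}$ reflects Huq-commuting pairs of morphisms. Explicitly: given points $(A_1,\alpha_1,\beta_1)$, $(A_2,\alpha_2,\beta_2)$, $(A,\alpha,\beta)$ over $B$ and morphisms of points $v_1\colon(A_1,\alpha_1,\beta_1)\to(A,\alpha,\beta)$, $v_2\colon(A_2,\alpha_2,\beta_2)\to(A,\alpha,\beta)$, if the restrictions $\mathrm{Ker}_B(v_1)\colon \mathrm{Ker}(\alpha_1)\to\mathrm{Ker}(\alpha)$ and $\mathrm{Ker}_B(v_2)\colon\mathrm{Ker}(\alpha_2)\to\mathrm{Ker}(\alpha)$ Huq-commute in $\mathsf{HSLat}$, then $v_1$ and $v_2$ Huq-commute in $\mathsf{Pt}_B(\mathsf{HSLat})$.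
   Context: A Heyting semilattice is a meet-semilattice $(H,\wedge)$ with top element $1$ and a binary operation $\Rightarrow$ such that $x\wedge y\le z$ iff $x\le y\Rightarrow z$; morphisms preserve $1$, $\wedge$ and $\Rightarrow$. $\mathsf{HSLat}$ is the resulting category (a pointed variety, zero object $\{1\}$). For an object $B$, $\mathsf{Pt}_B(\mathsf{HSLat})$ is the category of points over $B$: triples $(A,\alpha,\beta)$ with $\alpha\colon A\to B$, $\beta\colon B\to A$, $\alpha\beta=1_B$; morphisms $f\colon(A,\alpha,\beta)\to(A',\alpha',\beta')$ satisfy $\alpha' f=\alpha$, $f\beta=\beta'$. Its zero object is $(B,1_B,1_B)$. $\mathrm{Ker}_B$ sends $(A,\alpha,\beta)$ to $\mathrm{Ker}(\alpha)$. In a pointed category with finite products, two morphisms $f\colon X\to A$, $g\colon Y\to A$ Huq-commute if there is a morphism $\varphi\colon X\times Y\to A$ with $\varphi\circ(1_X,0)=f$ and $\varphi\circ(0,1_Y)=g$. *)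

(* Defs.v *)
From Stdlib Require Import ProofIrrelevance.
Set Implicit Arguments.
Unset Strict Implicit.

(** A Heyting semilattice: meet-semilattice (H, meet) with top and an
    implication adjoint to meet; the order is x <= y :<-> meet x y = x. *)
Record HSLat := {
  car :> Type;
  hmeet : car -> car -> car;
  htop : car;
  himp : car -> car -> car;
  hmeetA : forall x y z, hmeet x (hmeet y z) = hmeet (hmeet x y) z;
  hmeetC : forall x y, hmeet x y = hmeet y x;
  hmeetxx : forall x, hmeet x x = x;
  hmeetx1 : forall x, hmeet x htop = x;
  himpP : forall x y z,
      hmeet (hmeet x y) z = hmeet x y <-> hmeet x (himp y z) = x
}.
Arguments hmeet {h}. Arguments htop {h}. Arguments himp {h}.

Record hom (X Y : HSLat) := {
  hfun :> X -> Y;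
  hom1 : hfun htop = htop;
  homM : forall x y, hfun (hmeet x y) = hmeet (hfun x) (hfun y);
  homI : forall x y, hfun (himp x y) = himp (hfun x) (hfun y)
}.

Definition prodH (X Y : HSLat) : HSLat.
Proof.
refine {| car := (X * Y)%type;
          hmeet := fun p q => (hmeet (fst p) (fst q), hmeet (snd p) (snd q));
          htop := (htop, htop);
          himp := fun p q => (himp (fst p) (fst q), himp (snd p) (snd q)) |}.
- intros [] [] []; simpl; now rewrite !hmeetA.
- intros [] []; simpl; now rewrite (@hmeetC X c), (@hmeetC Y c0).
- intros []; simpl; now rewrite !hmeetxx.
- intros []; simpl; now rewrite !hmeetx1.
- intros [x1 x2] [y1 y2] [z1 z2]; simpl; split; intro H; injection H; intros H2 H1;
    f_equal; apply himpP; assumption.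
Defined.

Lemma sig_eq (A : Type) (P : A -> Prop) (x y : {a | P a}) :
  proj1_sig x = proj1_sig y -> x = y.
Proof.
destruct x, y; simpl; intros ->; f_equal; apply proof_irrelevance.
Qed.

Definition subH (X : HSLat) (P : X -> Prop)
  (Pm : forall x y, P x -> P y -> P (hmeet x y)) (P1 : P htop)
  (Pi : forall x y, P x -> P y -> P (himp x y)) : HSLat.
Proof.
refine {| car := {x : X | P x};
          hmeet := fun x y => exist P (hmeet (proj1_sig x) (proj1_sig y))
                                 (Pm _ _ (proj2_sig x) (proj2_sig y));
          htop := exist P htop P1;
          himp := fun x y => exist P (himp (proj1_sig x) (proj1_sig y))
                                 (Pi _ _ (proj2_sig x) (proj2_sig y)) |}.
- intros; apply sig_eq; simpl; apply hmeetA.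
- intros; apply sig_eq; simpl; apply hmeetC.
- intros; apply sig_eq; simpl; apply hmeetxx.
- intros; apply sig_eq; simpl; apply hmeetx1.
- intros x y z; split; intro H.
  + apply sig_eq; simpl; apply himpP; exact (f_equal (@proj1_sig _ _) H).
  + apply sig_eq; simpl; apply himpP; exact (f_equal (@proj1_sig _ _) H).
Defined.

Lemma himp11 (X : HSLat) : himp (@htop X) htop = htop.
Proof.
assert (H : hmeet htop (himp (@htop X) htop) = htop).
{ apply himpP; now rewrite !hmeetx1. }
now rewrite hmeetC, hmeetx1 in H.
Qed.

Definition kerH (A B : HSLat) (f : hom A B) : HSLat.
Proof.
refine (@subH A (fun a => f a = htop) _ _ _).
- intros x y Hx Hy; now rewrite homM, Hx, Hy, hmeetx1.
- apply hom1.
- intros x y Hx Hy; now rewrite homI, Hx, Hy, himp11.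
Defined.

Record point (B : HSLat) := {
  pA : HSLat;
  palpha : hom pA B;
  pbeta : hom B pA;
  psplit : forall b, palpha (pbeta b) = b
}.

Record pthom (B : HSLat) (P Q : point B) := {
  pf :> hom (pA P) (pA Q);
  pf_alpha : forall a, palpha Q (pf a) = palpha P a;
  pf_beta : forall b, pf (pbeta P b) = pbeta Q b
}.

Definition kerMap (B : HSLat) (P Q : point B) (v : pthom P Q) :
  hom (kerH (palpha P)) (kerH (palpha Q)).
Proof.
refine (@Build_hom (kerH (palpha P)) (kerH (palpha Q))
          (fun k => exist (fun a => palpha Q a = htop) (v (proj1_sig k))
                      (eq_trans (pf_alpha v _) (proj2_sig k))) _ _ _).
- apply sig_eq; simpl; apply hom1.
- intros; apply sig_eq; simpl; apply homM.
- intros; apply sig_eq; simpl; apply homI.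
Defined.

(** Huq commutation in HSLat (zero morphisms are constantly 1, the product is prodH). *)
Definition huqH (X Y A : HSLat) (f : hom X A) (g : hom Y A) : Prop :=
  exists phi : hom (prodH X Y) A,
    (forall x, phi (x, htop) = f x) /\ (forall y, phi (htop, y) = g y).

(** Binary product in Pt_B: the pullback A1 x_B A2. *)
Definition pbH (B : HSLat) (P Q : point B) : HSLat.
Proof.
refine (@subH (prodH (pA P) (pA Q))
          (fun p => palpha P (fst p) = palpha Q (snd p)) _ _ _).
- intros [x1 x2] [y1 y2]; simpl; intros Hx Hy; now rewrite !homM, Hx, Hy.
- simpl; now rewrite !hom1.
- intros [x1 x2] [y1 y2]; simpl; intros Hx Hy; now rewrite !homI, Hx, Hy.
Defined.

Definition pb_alpha (B : HSLat) (P Q : point B) : hom (pbH P Q) B.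
Proof.
refine {| hfun := fun p : pbH P Q => palpha P (fst (proj1_sig p)) |}.
- apply hom1.
- intros; apply homM.
- intros; apply homI.
Defined.

Definition pb_beta (B : HSLat) (P Q : point B) : hom B (pbH P Q).
Proof.
refine (@Build_hom B (pbH P Q)
   (fun b => exist (fun p => palpha P (fst p) = palpha Q (snd p))
               (pbeta P b, pbeta Q b) (eq_trans (psplit P b) (eq_sym (psplit Q b)))) _ _ _).
- apply sig_eq; simpl; now rewrite !hom1.
- intros; apply sig_eq; simpl; now rewrite !homM.
- intros; apply sig_eq; simpl; now rewrite !homI.
Defined.

Definition prodPt (B : HSLat) (P Q : point B) : point B.
Proof.
refine {| pA := pbH P Q; palpha := pb_alpha P Q; pbeta := pb_beta P Q |}.
intro b; simpl; apply psplit.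
Defined.

(** The morphisms (1, 0) and (0, 1) into the product in Pt_B; the zero
    morphism P -> Q in Pt_B is beta_Q . alpha_P. *)
Definition pt_inl (B : HSLat) (P Q : point B) (x : pA P) : pA (prodPt P Q) :=
  exist _ (x, pbeta Q (palpha P x)) (eq_sym (psplit Q (palpha P x))).
Definition pt_inr (B : HSLat) (P Q : point B) (y : pA Q) : pA (prodPt P Q) :=
  exist _ (pbeta P (palpha Q y), y) (psplit P (palpha Q y)).

Definition huqPt (B : HSLat) (P1 P2 P : point B)
  (v1 : pthom P1 P) (v2 : pthom P2 P) : Prop :=
  exists phi : pthom (prodPt P1 P2) P,
    (forall x, phi (pt_inl P2 x) = v1 x) /\ (forall y, phi (pt_inr P1 y) = v2 y).

(* Main.v *)
Require Import Defs.


Section HS.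
Variable H : HSLat.
Implicit Types x y z w v : H.
Definition hle x y := hmeet x y = x.

Lemma le_refl x : hle x x. Proof. apply hmeetxx. Qed.
Lemma le_trans x y z : hle x y -> hle y z -> hle x z.
Proof. unfold hle; intros h1 h2. rewrite <- h1, <- hmeetA, h2. reflexivity. Qed.
Lemma le_antisym x y : hle x y -> hle y x -> x = y.
Proof. unfold hle; intros h1 h2. rewrite <- h1, hmeetC. exact h2. Qed.
Lemma meet_l x y : hle (hmeet x y) x.
Proof. unfold hle. rewrite (hmeetC x y), <- hmeetA, hmeetxx. reflexivity. Qed.
Lemma meet_r x y : hle (hmeet x y) y.
Proof. unfold hle. rewrite <- hmeetA, hmeetxx. reflexivity. Qed.
Lemma meet_glb z x y : hle z x -> hle z y -> hle z (hmeet x y).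
Proof. unfold hle; intros h1 h2. rewrite hmeetA, h1, h2. reflexivity. Qed.
Lemma le_top x : hle x htop. Proof. apply hmeetx1. Qed.
Lemma adj z x y : hle (hmeet z x) y <-> hle z (himp x y). Proof. apply himpP. Qed.

Definition fc w x := hle w x.
Lemma fc_mono v w x : hle v w -> fc w x -> fc v x. Proof. apply le_trans. Qed.
Lemma fc_meet w x y : fc w (hmeet x y) <-> fc w x /\ fc w y.
Proof. split. intro h; split; eapply le_trans; eauto using meet_l, meet_r.
intros [h1 h2]; apply meet_glb; auto. Qed.
Lemma fc_imp w x y : fc w (himp x y) <-> (forall v, hle v w -> fc v x -> fc v y).
Proof. split.
- intros h v hv hx. refine (le_trans _ _ _ (meet_glb _ _ _ (le_refl v) hx) _).
  apply adj. eapply le_trans; [exact hv|exact h].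
- intros h. apply adj. apply h. apply meet_l. apply meet_r. Qed.
Lemma fc_top w : fc w htop. Proof. apply le_top. Qed.
Lemma le_fc x y : (forall w, fc w x -> fc w y) -> hle x y.
Proof. intro h. apply h. apply le_refl. Qed.
Lemma eq_fc x y : (forall w, fc w x -> fc w y) -> (forall w, fc w y -> fc w x) -> x = y.
Proof. intros; apply le_antisym; apply le_fc; auto. Qed.
Lemma fc_mp w x y : fc w (himp x y) -> fc w x -> fc w y.
Proof. intros h1 h2. apply (proj1 (fc_imp w x y) h1 w (le_refl w) h2). Qed.
Lemma fc_top_eq x : (forall w, fc w x) -> x = htop.
Proof. intro h. apply le_antisym. apply le_top. apply h. Qed.

Lemma imp_xx x : himp x x = htop.
Proof. apply fc_top_eq. intro w. apply fc_imp. auto. Qed.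
Lemma imp_1x x : himp htop x = x.
Proof. apply eq_fc; intros w h.
- eapply fc_mp. exact h. apply fc_top.
- apply fc_imp. intros v hv _. eapply fc_mono; eauto. Qed.
Lemma imp_x1 x : himp x htop = htop.
Proof. apply fc_top_eq. intro w. apply fc_imp. intros; apply fc_top. Qed.

Lemma CS (Fa Fb : H -> Prop) (huq : forall f g, Fa f -> Fb g -> himp f g = g)
  a g0 z w : Fa a -> Fb (himp (himp g0 z) z) ->
  (forall v, hle v w -> fc v a -> fc v z) ->
  (forall v, hle v w -> fc v g0 -> fc v z) -> fc w z.
Proof.
intros Fa0 Fg h1 h2.
assert (hg : fc w (himp g0 z)) by (apply fc_imp; auto).
assert (h : fc w (himp a (himp (himp g0 z) z))).
{ apply fc_imp. intros v hv ha. apply fc_imp. intros t ht _.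
  eapply fc_mono; [exact ht|]. auto. }
rewrite huq in h by auto.
eapply fc_mp; eauto.
Qed.

Definition M x y q := hmeet (himp (himp x q) y) (himp (himp y q) x).
Lemma fc_M w x y q : fc w (M x y q) <->
  (forall v, hle v w -> fc v (himp x q) -> fc v y) /\
  (forall v, hle v w -> fc v (himp y q) -> fc v x).
Proof. unfold M. split.
- intro h. destruct (proj1 (fc_meet _ _ _) h) as [h1 h2].
  split; apply fc_imp; assumption.
- intros [h1 h2]. apply fc_meet; split; apply fc_imp; assumption. Qed.

End HS.
Arguments hle {H}. Arguments fc {H}. Arguments M {H}.


Section Core.
Variable H : HSLat.
Implicit Types x y z w v : H.

Lemma fc_impE w v x y : fc w (himp x y) -> hle v w -> fc v x -> fc v y.
Proof. intros h; apply (proj1 (fc_imp _ _ _ _) h). Qed.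
Lemma fc_impI w x y : (forall v, hle v w -> fc v x -> fc v y) -> fc w (himp x y).
Proof. apply fc_imp. Qed.
Lemma fc_m1 w x y : fc w (hmeet x y) -> fc w x. Proof. intro h; apply (proj1 (fc_meet _ _ _ _) h). Qed.
Lemma fc_m2 w x y : fc w (hmeet x y) -> fc w y. Proof. intro h; apply (proj1 (fc_meet _ _ _ _) h). Qed.
Lemma fc_mI w x y : fc w x -> fc w y -> fc w (hmeet x y). Proof. intros; apply fc_meet; auto. Qed.

Lemma pair_imp u x q x' q' : fc u (himp x q) -> fc u (himp x' q') ->
  fc u (himp (hmeet x x') (hmeet q q')).
Proof. intros h1 h2. apply fc_impI. intros t ht hx. apply fc_mI.
eapply fc_impE; [exact h1|exact ht|eapply fc_m1; eauto].
eapply fc_impE; [exact h2|exact ht|eapply fc_m2; eauto]. Qed.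

Ltac ltr := first [ assumption | apply le_refl |
  match goal with h1 : @hle _ ?a ?b, h2 : @hle _ ?b ?c |- @hle _ ?a ?c => exact (le_trans _ _ _ _ h1 h2) end |
  match goal with h1 : @hle _ ?a ?b, h2 : @hle _ ?b ?c, h3 : @hle _ ?c ?d |- @hle _ ?a ?d =>
     exact (le_trans _ _ _ _ h1 (le_trans _ _ _ _ h2 h3)) end ].

Ltac fm := match goal with h: @fc _ ?w ?x |- @fc _ ?v ?x => apply (fc_mono _ v w x); [ltr|exact h] end.

Definition EQ a0 x q x' q' := forall v, fc v a0 ->
  fc v (himp x q) /\ fc v (himp q x) /\ fc v (himp x' q') /\ fc v (himp q' x').

Variables (Fa Fb : H -> Prop) (huq : forall f g, Fa f -> Fb g -> himp f g = g).
Variables (x y q x' y' q' a0 g0 : H).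
Hypotheses (ha : EQ a0 x q x' q') (hg : EQ g0 y q y' q') (Fa0 : Fa a0)
  (Fy : Fb (himp (himp g0 y) y)) (Fy' : Fb (himp (himp g0 y') y')).

Lemma half_a w :
 (forall v, hle v w -> fc v (himp (hmeet x x') (hmeet q q')) -> fc v (hmeet y y')) ->
 (forall v, hle v w -> fc v (himp (hmeet y y') (hmeet q q')) -> fc v (hmeet x x')) ->
 (forall v, hle v w -> fc v (himp x q) -> fc v y) /\
 (forall v, hle v w -> fc v (himp x' q') -> fc v y').
Proof.
intros H1 H2; split; intros v hv hs.
- apply (CS H Fa Fb huq a0 g0 y v Fa0 Fy).
  + intros u hu h0. destruct (ha u h0) as [e1 [e2 [e3 e4]]].
    eapply fc_m1. apply H1. ltr. apply pair_imp; auto.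
  + intros u hu h0. destruct (hg u h0) as [e1 [e2 [e3 e4]]].
    assert (hx : fc u (hmeet x x')) by (apply H2; [ltr|apply pair_imp; auto]).
    eapply fc_impE; [exact e2|apply le_refl|].
    eapply fc_impE; [exact hs|exact hu|eapply fc_m1; eauto].
- apply (CS H Fa Fb huq a0 g0 y' v Fa0 Fy').
  + intros u hu h0. destruct (ha u h0) as [e1 [e2 [e3 e4]]].
    eapply fc_m2. apply H1. ltr. apply pair_imp; auto.
  + intros u hu h0. destruct (hg u h0) as [e1 [e2 [e3 e4]]].
    assert (hx : fc u (hmeet x x')) by (apply H2; [ltr|apply pair_imp; auto]).
    eapply fc_impE; [exact e4|apply le_refl|].
    eapply fc_impE; [exact hs|exact hu|eapply fc_m2; eauto].
Qed.

Lemma half_b w :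
 (forall v, hle v w -> fc v (himp x q) -> fc v y) ->
 (forall v, hle v w -> fc v (himp y q) -> fc v x) ->
 (forall v, hle v w -> fc v (himp x' q') -> fc v y') ->
 (forall v, hle v w -> fc v (himp y' q') -> fc v x') ->
 (forall v, hle v w -> fc v (himp (hmeet x x') (hmeet q q')) -> fc v (hmeet y y')).
Proof.
intros H1 H2 H1' H2' v hv hs. apply fc_mI.
- apply (CS H Fa Fb huq a0 g0 y v Fa0 Fy).
  + intros u hu h0. destruct (ha u h0) as [e1 [e2 [e3 e4]]].
    apply H1; auto. ltr.
  + intros u hu h0. destruct (hg u h0) as [e1 [e2 [e3 e4]]].
    assert (hx : fc u x) by (apply H2; auto; ltr).
    assert (hx' : fc u x') by (apply H2'; auto; ltr).
    eapply fc_impE; [exact e2|apply le_refl|].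
    eapply fc_m1. eapply fc_impE; [exact hs|exact hu|apply fc_mI; auto].
- apply (CS H Fa Fb huq a0 g0 y' v Fa0 Fy').
  + intros u hu h0. destruct (ha u h0) as [e1 [e2 [e3 e4]]].
    apply H1'; auto. ltr.
  + intros u hu h0. destruct (hg u h0) as [e1 [e2 [e3 e4]]].
    assert (hx : fc u x) by (apply H2; auto; ltr).
    assert (hx' : fc u x') by (apply H2'; auto; ltr).
    eapply fc_impE; [exact e4|apply le_refl|].
    eapply fc_m2. eapply fc_impE; [exact hs|exact hu|apply fc_mI; auto].
Qed.

Lemma half_c w :
 (forall v, hle v w -> fc v (himp (himp x x') (himp q q')) -> fc v (himp y y')) ->
 (forall v, hle v w -> fc v (himp (himp y y') (himp q q')) -> fc v (himp x x')) ->
 (forall v, hle v w -> fc v (himp x q) -> fc v y) ->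
 (forall v, hle v w -> fc v (himp y q) -> fc v x) ->
 (forall v, hle v w -> fc v (himp x' q') -> fc v y').
Proof.
intros P1 P2 Q1 Q2 v hv hs.
apply (CS H Fa Fb huq a0 g0 y' v Fa0 Fy').
- intros u hu h0. destruct (ha u h0) as [e1 [e2 [e3 e4]]].
  assert (huw : hle u w) by (ltr).
  assert (hy : fc u y) by (apply Q1; auto).
  assert (hyy : fc u (himp y y')).
  { apply P1; auto. apply fc_impI; intros t ht hxx. apply fc_impI; intros r hr hq.
    assert (hrt : hle r u) by (ltr).
    eapply fc_impE; [exact e3|exact hrt|].
    eapply fc_impE; [exact hxx|exact hr|].
    eapply fc_impE; [exact e2|exact hrt|exact hq]. }
  eapply fc_impE; [exact hyy|apply le_refl|exact hy].
- intros u hu h0. destruct (hg u h0) as [e1 [e2 [e3 e4]]].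
  assert (huw : hle u w) by (ltr).
  assert (hx : fc u x) by (apply Q2; auto).
  assert (hxx : fc u (himp x x')).
  { apply P2; auto. apply fc_impI; intros t ht hyy. apply fc_impI; intros r hr hq.
    assert (hrt : hle r u) by (ltr).
    eapply fc_impE; [exact e3|exact hrt|].
    eapply fc_impE; [exact hyy|exact hr|].
    eapply fc_impE; [exact e2|exact hrt|exact hq]. }
  eapply fc_impE; [exact e4|apply le_refl|].
  eapply fc_impE; [exact hs|exact hu|].
  eapply fc_impE; [exact hxx|apply le_refl|exact hx].
Qed.

Lemma half_d w :
 (forall v, hle v w ->
    (forall t, hle t v -> fc t (himp x q) -> fc t y) ->
    (forall t, hle t v -> fc t (himp y q) -> fc t x) ->
    (forall t, hle t v -> fc t (himp x' q') -> fc t y') /\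
    (forall t, hle t v -> fc t (himp y' q') -> fc t x')) ->
 (forall v, hle v w -> fc v (himp (himp x x') (himp q q')) -> fc v (himp y y')).
Proof.
intros Z v hv hs. apply fc_impI. intros r hr hy.
assert (hrw : hle r w) by (ltr).
apply (CS H Fa Fb huq a0 g0 y' r Fa0 Fy').
- intros u hu h0. destruct (ha u h0) as [e1 [e2 [e3 e4]]].
  assert (huw : hle u w) by (ltr).
  assert (hyu : fc u y) by (fm).
  destruct (Z u huw) as [Z1 _].
  + intros t ht _. fm.
  + intros t ht hyq. eapply fc_impE; [exact e2|exact ht|].
    eapply fc_impE; [exact hyq|apply le_refl|fm].
  + apply Z1; auto. apply le_refl.
- intros u hu h0. destruct (hg u h0) as [e1 [e2 [e3 e4]]].
  assert (huw : hle u w) by (ltr).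
  assert (hyu : fc u y) by (fm).
  assert (hxx : fc u (himp x x')).
  { apply fc_impI. intros t ht hx.
    assert (htw : hle t w) by (ltr).
    destruct (Z t htw) as [_ Z2].
    + intros t' ht' _. fm.
    + intros t' ht' _. fm.
    + apply Z2; [apply le_refl|]. fm. }
  assert (hqq : fc u (himp q q')).
  { eapply fc_impE; [exact hs|ltr|exact hxx]. }
  eapply fc_impE; [exact e4|apply le_refl|].
  eapply fc_impE; [exact hqq|apply le_refl|].
  eapply fc_impE; [exact e1|apply le_refl|exact hyu].
Qed.

End Core.

Section Assemble.
Variable H : HSLat.
Variables (F1 F2 : H -> Prop)
  (h12 : forall f g, F1 f -> F2 g -> himp f g = g)
  (h21 : forall f g, F2 f -> F1 g -> himp f g = g).
Variables (x y q x' y' q' a0 g0 : H).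
Hypotheses (ha : EQ H a0 x q x' q') (hg : EQ H g0 y q y' q') (Fa0 : F1 a0) (Fg0 : F2 g0)
  (Fy : F2 (himp (himp g0 y) y)) (Fy' : F2 (himp (himp g0 y') y'))
  (Fx : F1 (himp (himp a0 x) x)) (Fx' : F1 (himp (himp a0 x') x')).

Lemma M_meet : M (hmeet x x') (hmeet y y') (hmeet q q') = hmeet (M x y q) (M x' y' q').
Proof.
apply eq_fc; intros w h.
- destruct (proj1 (fc_M _ _ _ _ _) h) as [H1 H2].
  destruct (half_a H F1 F2 h12 x y q x' y' q' a0 g0 ha hg Fa0 Fy Fy' w H1 H2) as [A1 A1'].
  destruct (half_a H F2 F1 h21 y x q y' x' q' g0 a0 hg ha Fg0 Fx Fx' w H2 H1) as [B1 B1'].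
  apply fc_mI; apply fc_M; split; assumption.
- destruct (proj1 (fc_M _ _ _ _ _) (fc_m1 _ _ _ _ h)) as [Q1 Q2].
  destruct (proj1 (fc_M _ _ _ _ _) (fc_m2 _ _ _ _ h)) as [Q1' Q2'].
  apply fc_M; split.
  + exact (half_b H F1 F2 h12 x y q x' y' q' a0 g0 ha hg Fa0 Fy Fy' w Q1 Q2 Q1' Q2').
  + exact (half_b H F2 F1 h21 y x q y' x' q' g0 a0 hg ha Fg0 Fx Fx' w Q2 Q1 Q2' Q1').
Qed.

Lemma M_imp : M (himp x x') (himp y y') (himp q q') = himp (M x y q) (M x' y' q').
Proof.
apply eq_fc; intros w h.
- destruct (proj1 (fc_M _ _ _ _ _) h) as [P1 P2].
  apply fc_impI. intros v hv hM.
  destruct (proj1 (fc_M _ _ _ _ _) hM) as [Q1 Q2].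
  assert (P1v : forall t, hle t v -> fc t (himp (himp x x') (himp q q')) -> fc t (himp y y'))
    by (intros t ht; apply P1; exact (le_trans _ _ _ _ ht hv)).
  assert (P2v : forall t, hle t v -> fc t (himp (himp y y') (himp q q')) -> fc t (himp x x'))
    by (intros t ht; apply P2; exact (le_trans _ _ _ _ ht hv)).
  apply fc_M; split.
  + exact (half_c H F1 F2 h12 x y q x' y' q' a0 g0 ha hg Fa0 Fy' v P1v P2v Q1 Q2).
  + exact (half_c H F2 F1 h21 y x q y' x' q' g0 a0 hg ha Fg0 Fx' v P2v P1v Q2 Q1).
- assert (Z : forall v, hle v w ->
    (forall t, hle t v -> fc t (himp x q) -> fc t y) ->
    (forall t, hle t v -> fc t (himp y q) -> fc t x) ->
    (forall t, hle t v -> fc t (himp x' q') -> fc t y') /\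
    (forall t, hle t v -> fc t (himp y' q') -> fc t x')).
  { intros v hv Q1 Q2. apply (fc_M _ v x' y' q').
    eapply fc_impE; [exact h|exact hv|]. apply fc_M; split; assumption. }
  apply fc_M; split.
  + exact (half_d H F1 F2 h12 x y q x' y' q' a0 g0 ha hg Fa0 Fy' w Z).
  + apply (half_d H F2 F1 h21 y x q y' x' q' g0 a0 hg ha Fg0 Fx' w).
    intros v hv Q2 Q1. destruct (Z v hv Q1 Q2); split; assumption.
Qed.
End Assemble.


Lemma hom_M (X Y : HSLat) (f : hom X Y) x y q : f (M x y q) = M (f x) (f y) (f q).
Proof. unfold M. now rewrite !homM, !homI. Qed.

Lemma mp' (X : HSLat) (x q : X) : hle x (himp (himp x q) q).
Proof. apply le_fc. intros w hx. apply fc_impI. intros v hv h.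
eapply fc_impE; [exact h|apply le_refl|]. exact (fc_mono _ _ _ _ hv hx). Qed.

Lemma M_xqq (X : HSLat) (x q : X) : M x q q = x.
Proof. unfold M. rewrite imp_xx, imp_1x. apply le_antisym. apply meet_r.
apply meet_glb; [apply mp'|apply le_refl]. Qed.

Lemma M_qyq (X : HSLat) (y q : X) : M q y q = y.
Proof. unfold M. rewrite imp_xx, imp_1x, hmeetC. apply le_antisym. apply meet_r.
apply meet_glb; [apply mp'|apply le_refl]. Qed.

Lemma M_qqq (X : HSLat) (q : X) : M q q q = q.
Proof. apply M_xqq. Qed.

Definition iffH {X : HSLat} (x q : X) := hmeet (himp x q) (himp q x).

Lemma EQ_ok (X : HSLat) (x q x' q' : X) : EQ X (hmeet (iffH x q) (iffH x' q')) x q x' q'.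
Proof. intros v h. unfold iffH in h.
destruct (proj1 (fc_meet _ _ _ _) h) as [h1 h2].
destruct (proj1 (fc_meet _ _ _ _) h1). destruct (proj1 (fc_meet _ _ _ _) h2). auto. Qed.

Section V.
Variables (B : HSLat) (P1 P : point B) (v1 : pthom P1 P).
Definition VV (z : pA P) (b : B) := exists a, palpha P1 a = b /\ v1 a = z.
Lemma VV_x a : VV (v1 a) (palpha P1 a). Proof. exists a; auto. Qed.
Lemma VV_beta b : VV (pbeta P b) b.
Proof. exists (pbeta P1 b). split. apply psplit. apply pf_beta. Qed.
Lemma VV_meet z z' b b' : VV z b -> VV z' b' -> VV (hmeet z z') (hmeet b b').
Proof. intros [a [e1 e2]] [a' [e1' e2']]. exists (hmeet a a').
rewrite !homM; subst; auto. Qed.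
Lemma VV_imp z z' b b' : VV z b -> VV z' b' -> VV (himp z z') (himp b b').
Proof. intros [a [e1 e2]] [a' [e1' e2']]. exists (himp a a').
rewrite !homI; subst; auto. Qed.
Lemma VV_conv z b b' : VV z b -> b = b' -> VV z b'.
Proof. intros h e; subst; auto. Qed.
End V.
Arguments VV {B P1 P} v1 z b.

Ltac vb := repeat first [ apply VV_meet | apply VV_imp | apply VV_x | apply VV_beta ].
Ltac bsimp := do 6 (rewrite ?imp_xx, ?hmeetx1, ?imp_1x, ?imp_x1).

Section Main.
Variables (B : HSLat) (P1 P2 P : point B) (v1 : pthom P1 P) (v2 : pthom P2 P).
Variable phi : hom (prodH (kerH (palpha P1)) (kerH (palpha P2))) (kerH (palpha P)).
Hypotheses (Hl : forall x, phi (x, htop) = kerMap v1 x) (Hr : forall y, phi (htop, y) = kerMap v2 y).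

Definition F1 f := VV v1 f htop.
Definition F2 f := VV v2 f htop.

Lemma h12 f g : F1 f -> F2 g -> himp f g = g.
Proof.
intros [k1 [e1 r1]] [k2 [e2 r2]]. subst.
set (c1 := exist (fun a => palpha P1 a = htop) k1 e1 : kerH (palpha P1)).
set (c2 := exist (fun a => palpha P2 a = htop) k2 e2 : kerH (palpha P2)).
assert (E := homI phi (c1, htop) (htop, c2)).
assert (X : @himp (prodH (kerH (palpha P1)) (kerH (palpha P2))) (c1, htop) (htop, c2) = (htop, c2)).
{ cbn [himp prodH fst snd]. now rewrite imp_x1, imp_1x. }
rewrite X, Hl, Hr in E.
apply (f_equal (@proj1_sig _ _)) in E. simpl in E. symmetry; exact E.
Qed.

Lemma h21 f g : F2 f -> F1 g -> himp f g = g.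
Proof.
intros [k2 [e2 r2]] [k1 [e1 r1]]. subst.
set (c1 := exist (fun a => palpha P1 a = htop) k1 e1 : kerH (palpha P1)).
set (c2 := exist (fun a => palpha P2 a = htop) k2 e2 : kerH (palpha P2)).
assert (E := homI phi (htop, c2) (c1, htop)).
assert (X : @himp (prodH (kerH (palpha P1)) (kerH (palpha P2))) (htop, c2) (c1, htop) = (c1, htop)).
{ cbn [himp prodH fst snd]. now rewrite imp_x1, imp_1x. }
rewrite X, Hl, Hr in E.
apply (f_equal (@proj1_sig _ _)) in E. simpl in E. symmetry; exact E.
Qed.

Definition Phi (u : pbH P1 P2) : pA P :=
  M (v1 (fst (proj1_sig u))) (v2 (snd (proj1_sig u))) (pbeta P (palpha P1 (fst (proj1_sig u)))).

Ltac memb e e' := unfold F1, F2, iffH; eapply VV_conv; [vb|]; rewrite ?e, ?e'; bsimp; reflexivity.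

Lemma key_meet a1 a2 a1' a2' (e : palpha P1 a1 = palpha P2 a2) (e' : palpha P1 a1' = palpha P2 a2') :
  M (v1 (hmeet a1 a1')) (v2 (hmeet a2 a2')) (pbeta P (palpha P1 (hmeet a1 a1'))) =
  hmeet (M (v1 a1) (v2 a2) (pbeta P (palpha P1 a1))) (M (v1 a1') (v2 a2') (pbeta P (palpha P1 a1'))).
Proof.
rewrite !homM.
apply (M_meet _ F1 F2 h12 h21 _ _ _ _ _ _ _ _ (EQ_ok _ _ _ _ _) (EQ_ok _ _ _ _ _)); memb e e'.
Qed.

Lemma key_imp a1 a2 a1' a2' (e : palpha P1 a1 = palpha P2 a2) (e' : palpha P1 a1' = palpha P2 a2') :
  M (v1 (himp a1 a1')) (v2 (himp a2 a2')) (pbeta P (palpha P1 (himp a1 a1'))) =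
  himp (M (v1 a1) (v2 a2) (pbeta P (palpha P1 a1))) (M (v1 a1') (v2 a2') (pbeta P (palpha P1 a1'))).
Proof.
rewrite !homI.
apply (M_imp _ F1 F2 h12 h21 _ _ _ _ _ _ _ _ (EQ_ok _ _ _ _ _) (EQ_ok _ _ _ _ _)); memb e e'.
Qed.

Lemma Phi1 : Phi htop = htop.
Proof. unfold Phi; simpl. rewrite !hom1. apply M_qqq. Qed.

Lemma PhiM u u' : Phi (hmeet u u') = hmeet (Phi u) (Phi u').
Proof. destruct u as [[a1 a2] e]; destruct u' as [[a1' a2'] e']. unfold Phi; simpl.
simpl in e, e'. apply key_meet; auto. Qed.

Lemma PhiI u u' : Phi (himp u u') = himp (Phi u) (Phi u').
Proof. destruct u as [[a1 a2] e]; destruct u' as [[a1' a2'] e']. unfold Phi; simpl.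
simpl in e, e'. apply key_imp; auto. Qed.

Definition PhiH : hom (pA (prodPt P1 P2)) (pA P) := @Build_hom (pA (prodPt P1 P2)) (pA P) Phi Phi1 PhiM PhiI.

Lemma Phi_alpha u : palpha P (PhiH u) = palpha (prodPt P1 P2) u.
Proof. destruct u as [[a1 a2] e]. simpl in e. simpl. unfold Phi; simpl.
rewrite hom_M, !pf_alpha, psplit, <- e. apply M_qqq. Qed.

Lemma Phi_beta b : PhiH (pbeta (prodPt P1 P2) b) = pbeta P b.
Proof. simpl. unfold Phi; simpl. rewrite !pf_beta, psplit. apply M_qqq. Qed.

Definition PhiPt : pthom (prodPt P1 P2) P := @Build_pthom B (prodPt P1 P2) P PhiH Phi_alpha Phi_beta.

End Main.

Theorem mainTheorem1 :
  forall (B : HSLat) (P1 P2 P : point B) (v1 : pthom P1 P) (v2 : pthom P2 P),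
    huqH (kerMap v1) (kerMap v2) -> huqPt v1 v2.
Proof.
intros B P1 P2 P v1 v2 [phi [Hl Hr]].
exists (@PhiPt B P1 P2 P v1 v2 phi Hl Hr). split.
- intro x. simpl. unfold Phi; simpl. rewrite pf_beta. apply M_xqq.
- intro y. simpl. unfold Phi; simpl. rewrite pf_beta, psplit. apply M_qyq.
Qed.
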